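(* Let $n$ be a positive integer and $\mathcal{X}$ a class of finite groups with $c^{\mathcal{X}}_n<1$. Let $G$ be a profinite group, $M$ a normal open subgroup of $G$, and $\phi$ a continuous automorphism of $M$ with $\phi^n=\mathrm{id}$ such that for every normal open subgroup $N$ of $G$ contained in $M$ we have $N^\phi\subseteq N$ and $M/N\in\mathcal{X}$. If $X_{n,\phi}(M)\neq M$, then $\mathbf{m}_M(X_{n,\phi}(M))\leq c^{\mathcal{X}}_n$.
   Context: $\mathbf{m}_M$ denotes the normalized Haar measure of the compact group $M$. For a group $K$ and an automorphism $\phi$ of $K$ whose order divides $n$, writing $x^\phi$ for the image of $x$, $X_{n,\phi}(K):=\{x\in K : x x^{\phi} x^{\phi^2}\cdots x^{\phi^{n-1}}=1\}$. For a class $\mathcal{X}$ of finite groups, $$c^{\mathcal{X}}_n:=\sup\left(\left\{\frac{|X_{n,\phi}(H)|}{|H|} : H\in\mathcal{X},\ \phi\in \mathrm{Aut}(H),\ \phi^n=\mathrm{id}\right\}\setminus\{1\}\right).$$ *)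

(* Defs.v *)
From HB Require Import structures.
From mathcomp Require Import all_boot all_order all_algebra all_fingroup.
From mathcomp Require Import all_classical all_reals all_analysis.
Set Implicit Arguments. Unset Strict Implicit. Unset Printing Implicit Defensive.
Import Order.TTheory GRing.Theory Num.Theory.
Local Open Scope classical_set_scope.
Local Open Scope ring_scope.

Section TopGroups.
Variables (T : ptopologicalType) (mul : T -> T -> T) (inv : T -> T) (one : T).

Definition is_group_law : Prop :=
  [/\ forall x y z, mul x (mul y z) = mul (mul x y) z,
      forall x, mul one x = x /\ mul x one = x &
      forall x, mul (inv x) x = one /\ mul x (inv x) = one].

Definition is_topological_group : Prop :=
  [/\ is_group_law,
      continuous (fun p : T * T => mul p.1 p.2) &
      continuous inv].

Definition is_profinite_group : Prop :=
  [/\ is_topological_group, compact [set: T], hausdorff_space T &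
      totally_disconnected [set: T]].

Definition is_subgroup (H : set T) : Prop :=
  [/\ H one, forall x y, H x -> H y -> H (mul x y) &
      forall x, H x -> H (inv x)].

Definition is_normal_subgroup (H : set T) : Prop :=
  is_subgroup H /\ forall g x, H x -> H (mul (inv g) (mul x g)).

Definition is_open_normal_subgroup (H : set T) : Prop :=
  is_normal_subgroup H /\ open H.

Definition is_continuous_automorphism (M : set T) (phi : T -> T) : Prop :=
  [/\ set_bij M M phi,
      forall x y, M x -> M y -> phi (mul x y) = mul (phi x) (phi y) &
      {within M, continuous phi}].

Fixpoint twisted_norm (phi : T -> T) (k : nat) (x : T) : T :=
  match k with
  | 0 => one
  | k'.+1 => mul (twisted_norm phi k' x) (iter k' phi x)
  end.

Definition Xset (n : nat) (phi : T -> T) (M : set T) : set T :=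
  [set x | M x /\ twisted_norm phi n x = one].

Definition ltrans (x : T) (A : set T) : set T := [set mul x a | a in A].

(* normalized (left) Haar measure of the subgroup M (M open in T, so the
   Borel sets of M are the Borel sets of T contained in M): a measure on
   the Borel sigma-algebra of T giving M mass 1 and invariant under left
   translation by elements of M on Borel subsets of M. *)
Definition is_normalized_Haar_measure_on (R : realType) (M : set T)
    (mu : {measure set (g_sigma_algebraType (@open T)) -> \bar R}) : Prop :=
  mu M = 1%E /\
  forall (x : T) (A : set (g_sigma_algebraType (@open T))),
    M x -> measurable A -> A `<=` M -> mu (ltrans x A) = mu A.

End TopGroups.

Local Open Scope group_scope.

Definition group_class := forall gT : finGroupType, {group gT} -> Prop.

Definition fXset (gT : finGroupType) (n : nat) (phi : {perm gT}) (H : {set gT})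
  : {set gT} := [set x in H | \prod_(i < n) (phi ^+ i)%g x == 1].

Definition cX_set (R : realType) (Xc : group_class) (n : nat) : set R :=
  [set r : R | exists (gT : finGroupType) (H : {group gT}) (phi : {perm gT}),
      [/\ Xc gT H, phi \in Aut H, (phi ^+ n)%g = 1%g &
          r = (#|fXset n phi H|%:R / #|H|%:R)%R]] `\` [set 1%R].

Arguments cX_set R Xc n : clear implicits.

Definition cX (R : realType) (Xc : group_class) (n : nat) : R :=
  sup (cX_set R Xc n).
Arguments cX R Xc n : clear implicits.

(* M/N belongs to the class Xc (up to isomorphism): there is a group
   H in Xc and a surjective homomorphism M -> H with kernel N. *)
Definition quotient_in_class (T : ptopologicalType) (mul : T -> T -> T)
    (one : T) (Xc : group_class) (M N : set T) : Prop :=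
  exists (gT : finGroupType) (H : {group gT}) (f : T -> gT),
    [/\ Xc gT H,
        forall x, M x -> f x \in H,
        forall h, h \in H -> exists2 x, M x & f x = h,
        forall x y, M x -> M y -> f (mul x y) = f x * f y &
        forall x, M x -> (f x = 1 <-> N x)].

(* Main.v *)
Set Warnings "-notation-overridden,-ambiguous-paths,-notation-incompatible-prefix,-deprecated".
Require Import Defs.
From HB Require Import structures.
From mathcomp Require Import all_boot all_order all_algebra all_fingroup.
From mathcomp Require Import all_classical all_reals all_analysis.
Set Implicit Arguments. Unset Strict Implicit. Unset Printing Implicit Defensive.
Import Order.TTheory GRing.Theory Num.Theory.
Local Open Scope classical_set_scope.
Local Open Scope ring_scope.
Lemma zd_sep (R : realType) (T : topologicalType) (x : T) :
  hausdorff_space T -> compact [set: T] ->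
  forall P1 P2 : set T, closed P1 -> closed P2 -> P1 `&` P2 = set0 ->
  \bigcap_(C in [set C | clopen C /\ C x]) C `<=` P1 `|` P2 -> P1 x ->
  \bigcap_(C in [set C | clopen C /\ C x]) C `<=` P1.
Proof.
move=> hT cT P1 P2 cP1 cP2 P12 QP P1x.
have := (@normal_openP R T).1 (compact_normal hT cT) P1 P2 cP1 cP2 P12.
case=> U [W [oU oW P1U P2W UW]].
set Q := \bigcap_(C in _) C.
have [C [clC Cx CK]] : exists C, [/\ clopen C, C x & C `&` ~` (U `|` W) = set0].
  apply: contrapT => nC.
  pose F := filter_from [set C : set T | clopen C /\ C x] (fun C => C `&` ~` (U `|` W)).
  have FF : Filter F.
    apply: filter_from_filter; first by exists setT; split => //; exact: clopenT.
    move=> C1 C2 [c1 x1] [c2 x2]; exists (C1 `&` C2); first by split; [exact: clopenI|].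
    by move=> z [[? ?] ?]; split; split.
  have PF : ProperFilter F.
    apply: filter_from_proper => // C [cC xC]; apply/set0P/eqP => C0.
    by apply: nC; exists C.
  have cK : compact (~` (U `|` W)).
    apply: (subclosed_compact _ cT) => //; apply: open_closedC; exact: openU.
  have [z [Kz clz]] : ~` (U `|` W) `&` cluster F !=set0.
    apply: cK; exists setT; first by split => //; exact: clopenT.
    by move=> ? [].
  have nQz : ~ Q z by move=> /QP [/P1U|/P2W] ?; apply: Kz; [left|right].
  have [C [clC Cx] nCz] : exists2 C, clopen C /\ C x & ~ C z.
    apply: contrapT => h; apply: nQz => C hC; apply: contrapT => nz.
    by apply: h; exists C.
  have := clz (C `&` ~` (U `|` W)) (~` C).
  case.
  - by exists C.
  - apply: open_nbhs_nbhs; split => //; apply: closed_openC; exact: clC.2.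
  - by move=> w [[]].
have clCU : clopen (C `&` U).
  split; first by apply: openI => //; exact: clC.1.
  have -> : C `&` U = C `&` ~` W.
    apply/seteqP; split => w [Cw Uw]; split => //.
      by move=> Ww; have : (U `&` W) w by [] ; rewrite UW.
    apply: contrapT => nU; have : (C `&` ~` (U `|` W)) w.
      by split => // -[]. 
    by rewrite CK.
  apply: closedI; [exact: clC.2| exact: open_closedC].
move=> z Qz; have : (C `&` U) z by apply: Qz; split => //; split => //; exact: P1U.
move=> [_ Uz]; case: (QP z Qz) => // /P2W Wz.
by have : (U `&` W) z by []; rewrite UW.
Qed.

Lemma zd (R : realType) (T : topologicalType) :
  hausdorff_space T -> compact [set: T] -> totally_disconnected [set: T] ->
  forall x y : T, x <> y -> exists U, [/\ clopen U, U x & ~ U y].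
Proof.
move=> hT cT tdT x y xy; apply: contrapT => nU.
set Q := \bigcap_(C in [set C | clopen C /\ C x]) C.
have Qx : Q x by move=> C [].
have Qy : Q y.
  move=> C [cC Cx]; apply: contrapT => nCy; apply: nU; by exists C.
have cQ : closed Q by apply: closed_bigI => C [[]].
have conQ : connected Q.
  move=> B B0 [C1 oC1 BC1] [C2 cC2 BC2].
  have [Bx|nBx] := pselect (B x).
    apply/seteqP; split; first by rewrite BC1 => ? [].
    move=> w Qw; rewrite BC2; move: w Qw.
    apply: (@zd_sep R T x hT cT (Q `&` C2) (Q `&` ~` C1)).
    - exact: closedI.
    - by apply: closedI => //; exact: open_closedC.
    - apply/seteqP; split => // w [[Qw C2w] [_ nC1w]]; apply: nC1w.
      have : B w by rewrite BC2.
      by rewrite BC1 => -[].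
    - move=> w Qw; have [C1w|nC1w] := pselect (C1 w); [left|by right].
      have : B w by rewrite BC1.
      by rewrite BC2.
    - by rewrite -BC2.
  exfalso; case: B0 => b Bb.
  have : (Q `&` ~` C1) b.
    apply: (@zd_sep R T x hT cT (Q `&` ~` C1) (Q `&` C2)).
    - by apply: closedI => //; exact: open_closedC.
    - exact: closedI.
    - apply/seteqP; split => // w [[Qw nC1w] [_ C2w]]; apply: nC1w.
      have : B w by rewrite BC2.
      by rewrite BC1 => -[].
    - move=> w Qw; have [C1w|nC1w] := pselect (C1 w); [right|by left].
      have : B w by rewrite BC1.
      by rewrite BC2.
    - split => // C1x; apply: nBx; by rewrite BC1.
    - by move: Bb; rewrite BC1 => -[].
  by move: Bb; rewrite BC1 => -[_ ?] [].
have := connected_component_max Qx (@subsetT _ Q) conQ Qy.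
by rewrite tdT // => yx; apply: xy.
Qed.

Section G.
Variables (T : ptopologicalType) (mul : T -> T -> T) (inv : T -> T) (one : T).
Hypothesis HG : is_group_law mul inv one.
Lemma gA x y z : mul x (mul y z) = mul (mul x y) z. Proof. by case: HG. Qed.
Lemma g1l x : mul one x = x. Proof. by case: HG => _ /(_ x) []. Qed.
Lemma g1r x : mul x one = x. Proof. by case: HG => _ /(_ x) []. Qed.
Lemma gVl x : mul (inv x) x = one. Proof. by case: HG => _ _ /(_ x) []. Qed.
Lemma gVr x : mul x (inv x) = one. Proof. by case: HG => _ _ /(_ x) []. Qed.
Lemma gK x y : mul (inv x) (mul x y) = y. Proof. by rewrite gA gVl g1l. Qed.
Lemma gKV x y : mul x (mul (inv x) y) = y. Proof. by rewrite gA gVr g1l. Qed.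
Lemma gKr a g : mul (mul a g) (inv g) = a. Proof. by rewrite -gA gVr g1r. Qed.
Lemma gKVr a g : mul (mul a (inv g)) g = a. Proof. by rewrite -gA gVl g1r. Qed.
Lemma gcanl x y z : mul x y = mul x z -> y = z.
Proof. by move=> /(congr1 (mul (inv x))); rewrite !gK. Qed.
Lemma ginvE x y : mul x y = one -> inv x = y.
Proof. by move=> h; apply: (@gcanl x); rewrite gVr h. Qed.
Lemma gVK x : inv (inv x) = x. Proof. by apply: ginvE; rewrite gVl. Qed.
Lemma gV1 : inv one = one. Proof. by apply: ginvE; rewrite g1l. Qed.
Lemma gVM x y : inv (mul x y) = mul (inv y) (inv x).
Proof. by apply: ginvE; rewrite -gA gKV gVr. Qed.
Hypothesis Hcm : continuous (fun p : T * T => mul p.1 p.2).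
Hypothesis Hci : continuous inv.

Lemma cont_mul2 (X : topologicalType) (F G : X -> T) p :
  {for p, continuous F} -> {for p, continuous G} ->
  {for p, continuous (fun z => mul (F z) (G z))}.
Proof.
move=> cF cG.
apply: (@continuous_comp _ _ _ (fun z => (F z, G z)) (fun q : T * T => mul q.1 q.2)).
  exact: cvg_pair.
exact: Hcm.
Qed.

Lemma cont_nbhs (X : topologicalType) (h : X -> T) p (W : set T) :
  {for p, continuous h} -> open W -> W (h p) -> nbhs p (h @^-1` W).
Proof. by move=> ch oW Wh; apply: ch; apply: open_nbhs_nbhs. Qed.

Lemma test (U : set T) (u : T) : open U -> U u ->
  \forall x' \near u & g \near one, U (mul x' g) /\ U (mul x' (inv g)).
Proof.
move=> oU Uu.
have c1 : {for (u, one), continuous (fun q : T * T => mul q.1 q.2)} by exact: Hcm.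
have c2 : {for (u, one), continuous (fun q : T * T => mul q.1 (inv q.2))}.
  apply: cont_mul2; first exact: cvg_fst.
  apply: (@continuous_comp _ _ _ snd inv); [exact: cvg_snd | exact: Hci].
have n1 := cont_nbhs c1 oU. have n2 := cont_nbhs c2 oU.
rewrite /= gV1 g1r in n1 n2.
have N1 := n1 Uu; have N2 := n2 Uu.
by apply: filterS (filterI N1 N2) => -[a b].
Qed.

Lemma open_normal_avoid (R : realType) : compact [set: T] -> hausdorff_space T ->
  totally_disconnected [set: T] -> forall t, t <> one ->
  exists N, is_open_normal_subgroup mul inv one N /\ ~ N t.
Proof.
move=> cT hT tdT t t1.
have [U [[oU cU] U1 nUt]] := zd R hT cT tdT (nesym t1).
pose V := [set g | forall u, U u -> U (mul u g) /\ U (mul u (inv g))].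
have V1 : V one by move=> u Uu; rewrite gV1 g1r.
have VM g h : V g -> V h -> V (mul g h).
  move=> Vg Vh u Uu; split; first by rewrite gA; apply: (Vh _ (Vg _ Uu).1).1.
  by rewrite gVM gA; apply: (Vg _ (Vh _ Uu).2).2.
have VV g : V g -> V (inv g) by move=> Vg u Uu; rewrite gVK; case: (Vg u Uu).
have VU : V `<=` U by move=> g /(_ one U1) []; rewrite g1l.
have cptU : compact U by apply: (subclosed_compact cU cT).
have nV : nbhs one V.
  have := (compact_near_coveringP U).1 cptU T (nbhs one)
    (fun g x' => U (mul x' g) /\ U (mul x' (inv g))) _ (fun u Uu => test oU Uu).
  move=> /(_ (nbhs_filter one)).
  by apply: filterS => g gU u Uu; apply: gU.
have oV : open V.
  rewrite openE => g Vg.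
  have ch : {for g, continuous (fun z => mul (inv g) z)}.
    apply: (cont_mul2 (F := fun _ => inv g) (G := id)); [exact: cvg_cst|exact: cvg_id].
  have := ch V; rewrite /= gVl => /(_ nV).
  move=> H; have {}H : nbhs g [set z | V (mul (inv g) z)] := H.
  change (nbhs g V); move: H; apply: filterS => z /= Vz.
  by rewrite -(gKV g z); apply: VM.
pose N := [set x | forall g, V (mul (inv g) (mul x g))].
exists N; split; last first.
  by move=> /(_ one); rewrite gV1 g1l g1r => /VU.
split; last first.
  rewrite openE => x0 Nx0.
  have := (compact_near_coveringP [set: T]).1 cT T (nbhs x0)
    (fun x g => V (mul (inv g) (mul x g))) (nbhs_filter x0).
  have cov : forall g, [set: T] g -> \forall g' \near g & x \near x0,
      V (mul (inv g') (mul x g')).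
    move=> g _.
    have cq : {for (g, x0), continuous (fun q : T * T => mul (inv q.1) (mul q.2 q.1))}.
      apply: (cont_mul2 (F := fun q : T * T => inv q.1) (G := fun q : T * T => mul q.2 q.1)).
        apply: (@continuous_comp _ _ _ fst inv); [exact: cvg_fst | exact: Hci].
      apply: (cont_mul2 (F := snd) (G := fst)); [exact: cvg_snd | exact: cvg_fst].
    exact: (cont_nbhs cq oV (Nx0 g)).
  move=> /(_ cov); apply: filterS => x /= Hx g; exact: Hx.
split; first split.
- by move=> g; rewrite g1l gVl.
- move=> x y Nx Ny g.
  have -> : mul (inv g) (mul (mul x y) g) =
            mul (mul (inv g) (mul x g)) (mul (inv g) (mul y g)).
    by rewrite !gA gKr.
  exact: VM.
- move=> x Nx g.
  have -> : mul (inv g) (mul (inv x) g) = inv (mul (inv g) (mul x g)).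
    by rewrite !gVM gVK gA.
  exact: VV.
- move=> h x Nx g.
  have -> : mul (inv g) (mul (mul (inv h) (mul x h)) g) =
            mul (inv (mul h g)) (mul x (mul h g)).
    by rewrite gVM !gA.
  exact: Nx.
Qed.
End G.

Unset Implicit Arguments.

Theorem proposition2p5 (R : realType) (n : nat) (Xc : group_class)
  (T : ptopologicalType) (mul : T -> T -> T) (inv : T -> T) (one : T)
  (M : set T) (phi : T -> T)
  (mu : {measure set (g_sigma_algebraType (@open T)) -> \bar R}) :
  (0 < n)%N ->
  cX R Xc n < 1 ->
  is_profinite_group mul inv one ->
  is_open_normal_subgroup mul inv one M ->
  is_continuous_automorphism mul M phi ->
  (forall x, M x -> iter n phi x = x) ->
  (forall N : set T, is_open_normal_subgroup mul inv one N -> N `<=` M ->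
     phi @` N `<=` N /\ quotient_in_class mul one Xc M N) ->
  is_normalized_Haar_measure_on mul M mu ->
  Xset mul one n phi M <> M ->
  (mu (Xset mul one n phi M) <= (cX R Xc n)%:E)%E.
Proof.
move=> n0 _ [[HG Hcm Hci] cT hT tdT] [[[M1 MM MV] Mnorm] oM]
  [[phiM _ phiS] phimul phic] phin HN [muM muinv] XM.
have gA := gA HG; have g1l := g1l HG; have g1r := g1r HG; have gVl := gVl HG.
have gVr := gVr HG; have gK := gK HG; have gKV := gKV HG; have gVK := gVK HG.
set tn := twisted_norm mul one phi.
have [x Mx tx1] : exists2 x, M x & tn n x <> one.
  apply: contrapT => h; apply: XM; apply/seteqP; split => [y [] //|y My].
  split => //; apply: contrapT => ny; apply: h; by exists y.
have [N0 [[[[N01 N0M N0V] N0n] oN0] nN0]] :=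
  @open_normal_avoid _ _ _ _ HG Hcm Hci R cT hT tdT _ tx1.
pose N := N0 `&` M.
have NM : N `<=` M by move=> ? [].
have oN : is_open_normal_subgroup mul inv one N.
  split; last exact: openI.
  split; first split.
  - by split.
  - by move=> a b [? ?] [? ?]; split; [apply: N0M|apply: MM].
  - by move=> a [? ?]; split; [apply: N0V|apply: MV].
  - by move=> g a [? ?]; split; [apply: N0n|apply: Mnorm].
have nNt : ~ N (tn n x) by move=> [].
have [phiN [gT [H [f [XH fH fsurj fmul fker]]]]] := HN N oN NM.
have f1 : f one = 1%g.
  have := fmul one one M1 M1; rewrite g1l => /(congr1 (mulg (f one)^-1)).
  by rewrite mulVg mulKg.
have fV y : M y -> f (inv y) = (f y)^-1%g.
  move=> My; have := fmul (inv y) y (MV y My) My; rewrite gVl f1 => e.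
  by rewrite -[f (inv y)](mulgK (f y)) -e mul1g.
have fibE a : M a -> [set y | M y /\ f y = f a] = [set y | N (mul (inv a) y)].
  move=> Ma; apply/seteqP; split => y /=.
  - move=> [My fy]; apply/(fker _ (MM _ _ (MV a Ma) My)).
    by rewrite fmul ?fV // ?fy ?mulVg //; exact: MV.
  - move=> Nz; have Mz := NM _ Nz; have fz := (fker _ Mz).2 Nz.
    rewrite -(gKV a y); split; first exact: MM.
    by rewrite fmul // fz mulg1.
have ltE a : ltrans mul a N = [set y | N (mul (inv a) y)].
  apply/seteqP; split => y /=; first by move=> [z Nz <-]; rewrite gK.
  by move=> Ny; exists (mul (inv a) y) => //; exact: gKV.
have oF a : open [set y | N (mul (inv a) y)].
  rewrite openE => y Ny; change (nbhs y [set y | N (mul (inv a) y)]).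
  apply: (cont_nbhs (h := fun z => mul (inv a) z)) => //; last exact: oN.2.
  apply: (cont_mul2 Hcm (F := fun _ => inv a) (G := id)); [exact: cvg_cst|exact: cvg_id].
have measO (A : set T) : open A -> measurable (A : set (g_sigma_algebraType (@open T))).
  by move=> oA; exact: sub_sigma_algebra.
pose pre h := get [set y | M y /\ f y = h].
have preP h : h \in H -> M (pre h) /\ f (pre h) = h.
  move=> hH; apply: (@getPex _ [set y | M y /\ f y = h]); case: (fsurj h hH) => y My fy; by exists y.
pose psi h := if h \in H then f (phi (pre h)) else h.
have psiE y : M y -> psi (f y) = f (phi y).
  move=> My; rewrite /psi fH //; have [Mp fp] := preP _ (fH _ My).
  move: Mp fp; set p := pre (f y) => Mp fp.
  have Nq : N (mul (inv y) p).
    by have : [set z | N (mul (inv y) z)] p by rewrite -(fibE y My).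
  have Mq := NM _ Nq.
  rewrite -(gKV y p) phimul // fmul; try exact: phiM.
  have -> : f (phi (mul (inv y) p)) = 1%g.
    by apply/(fker _ (phiM _ Mq))/phiN; exists (mul (inv y) p).
  by rewrite mulg1.
have iter_psi k z : M z -> iter k psi (f z) = f (iter k phi z) /\ M (iter k phi z).
  move=> Mz; elim: k => [|k [IH Mk]] //=; rewrite IH psiE //; split => //; exact: phiM.
have iter_psiN k h : h \notin H -> iter k psi h = h.
  by move=> hN; elim: k => //= k ->; rewrite /psi (negbTE hN).
have psin h : iter n psi h = h.
  case: (boolP (h \in H)) => hH; last exact: iter_psiN.
  by case: (fsurj h hH) => y My <-; rewrite (iter_psi n y My).1 phin.
have psi_inj : injective psi.
  by apply: (can_inj (g := iter n.-1 psi)) => h; rewrite -iterSr prednK // psin.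
pose phiH := perm psi_inj.
have phiHE h : phiH h = psi h by rewrite permE.
have AutH : phiH \in Aut H.
  rewrite inE; apply/andP; split.
    rewrite /perm_on /=; apply/fintype.subsetP => h; rewrite inE phiHE; apply: contraR => hN.
    by rewrite /psi (negbTE hN) eqxx.
  apply/morphicP => a b aH bH; rewrite !phiHE.
  case: (fsurj a aH) => ya Mya <-; case: (fsurj b bH) => yb Myb <-.
  rewrite -fmul // !psiE //; last exact: MM.
  by rewrite phimul // fmul; try exact: phiM.
have phiHn : (phiH ^+ n)%g = 1%g.
  by apply/permP => h; rewrite permX perm1 (eq_iter phiHE) psin.
have Mtn k y : M y -> M (tn k y).
  move=> My; elim: k => [|k IH] //=; apply: MM => //; exact: (iter_psi k y My).2.
have prodE y : M y -> forall k, (\prod_(i < k) (phiH ^+ i)%g (f y))%g = f (tn k y).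
  move=> My; elim => [|k IH]; first by rewrite big_ord0 /= f1.
  rewrite big_ord_recr /= IH permX (eq_iter phiHE) (iter_psi k y My).1 -fmul //; [exact: Mtn|exact: (iter_psi k y My).2].
pose fib h := [set y | M y /\ f y = h].
have fibE' h : h \in H -> fib h = [set y | N (mul (inv (pre h)) y)].
  by move=> hH; have [Mp fp] := preP h hH; rewrite -(fibE _ Mp) fp.
have mfib h : h \in H -> measurable (fib h : set (g_sigma_algebraType (@open T))).
  by move=> hH; rewrite fibE' //; apply: measO; apply: oF.
have mN : measurable (N : set (g_sigma_algebraType (@open T))) by apply: measO; exact: oN.2.
have mufib h : h \in H -> mu (fib h) = mu N.
  move=> hH; rewrite fibE' // -ltE; apply: muinv => //; exact: (preP h hH).1.
have sumfib (A : {set gT}) : A \subset H ->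
    measurable ([set y | M y /\ f y \in A] : set (g_sigma_algebraType (@open T))) /\
    mu [set y | M y /\ f y \in A] = (mu N *+ #|A|)%E.
  move=> AH; pose G k : set (g_sigma_algebraType (@open T)) := fib (nth 1%g (enum A) k).
  have GA k : (k < #|A|)%N -> nth 1%g (enum A) k \in A.
    by move=> kA; rewrite -mem_enum mem_nth // -cardE.
  have -> : [set y | M y /\ f y \in A] = \big[setU/set0]_(i < #|A|) G i.
    rewrite -bigcup_mkord; apply/seteqP; split => y.
    - move=> [My fyA]; exists (index (f y) (enum A)).
        by rewrite /= cardE index_mem mem_enum.
      by split => //; rewrite nth_index // mem_enum.
    - move=> [k /= kA [My ->]]; split => //; exact: GA.
  split.
    apply: bigsetU_measurable => i _; apply: mfib.
    apply: (fintype.subsetP AH); exact: GA.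
  rewrite (measure_bigsetU_ord _ xpredT (F := fun i : 'I_#|A| => G i)).
  - rewrite (eq_bigr (fun _ => mu N)); last first.
      move=> i _; apply: mufib; apply: (fintype.subsetP AH); exact: GA.
    by rewrite sumr_const card_ord.
  - move=> i; apply: mfib; apply: (fintype.subsetP AH); exact: GA.
  - move=> i j _ _ [y [[_ ei] [_ ej]]]; apply: val_inj => /=.
    move: ei; rewrite ej => /eqP; rewrite nth_uniq ?enum_uniq -?cardE //.
    by move/eqP.
have gVM := gVM HG.
pose S := fXset n phiH H.
have SH : S \subset H by apply/fintype.subsetP => h; rewrite inE => /andP[].
have inS y : M y -> (f y \in S) = (f (tn n y) == 1%g).
  by move=> My; rewrite inE fH //= prodE.
have fxS : f x \notin S.
  rewrite inS //; apply/eqP => e; apply: nNt; exact/(fker _ (Mtn n x Mx)).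
have ltSH : (#|S| < #|H|)%N.
  apply: proper_card; rewrite properE SH /=; apply/negP => /fintype.subsetP HS.
  by move: fxS; rewrite HS // fH.
have Hpos : (0 < #|H|)%N := cardG_gt0 H.
have HR0 : (#|H|%:R : R) != 0 by rewrite pnatr_eq0 -lt0n.
have rin : cX_set R Xc n (#|S|%:R / #|H|%:R).
  split; first by exists gT, H, phiH.
  move=> /= r1.
  have e : (#|S|%:R : R) = #|H|%:R.
    by rewrite -[LHS](divfK HR0) r1 mul1r.
  by move: e => /eqP; rewrite eqr_nat => /eqP e; rewrite e ltnn in ltSH.
have hs : has_sup (cX_set R Xc n).
  split; first by exists (#|S|%:R / #|H|%:R).
  exists 1 => e [[gT' [H' [p' [_ _ _ ->]]]] _].
  rewrite ler_pdivrMr ?mul1r ?ler_nat ?ltr0n ?cardG_gt0 //.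
  by apply: subset_leq_card; apply/fintype.subsetP => h; rewrite inE => /andP[].
have rle : #|S|%:R / #|H|%:R <= cX R Xc n := sup_upper_bound hs rin.
have MH : [set y | M y /\ f y \in H] = M.
  by apply/seteqP; split => y; [case|move=> My; split => //; exact: fH].
have muN : (mu N *+ #|H|)%E = 1%E.
  by rewrite -(sumfib _ (subxx _)).2 MH muM.
have mM : measurable (M : set (g_sigma_algebraType (@open T))) by apply: measO.
have muN1 : (mu N <= 1)%E.
  by rewrite -muM; apply: le_measure => //; rewrite inE.
have finN : mu N \is a fin_num.
  by rewrite ge0_fin_numE ?measure_ge0 // (le_lt_trans muN1) ?ltey.
pose m := fine (mu N).
have muNE : mu N = m%:E by rewrite fineK.
have mE : m = (#|H|%:R)^-1.
  move: muN; rewrite muNE -EFin_natmul => -[] e.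
  by apply: (mulIf HR0); rewrite mulVf // mulr_natr.
have Mcl : closed M.
  rewrite -openC openE => y nMy; change (nbhs y (~` M)).
  have : nbhs y [set z | M (mul (inv y) z)].
    apply: (cont_nbhs (h := fun z => mul (inv y) z)) => //; last by rewrite /= gVl.
    apply: (cont_mul2 Hcm (F := fun _ => inv y) (G := id)); [exact: cvg_cst|exact: cvg_id].
  apply: filterS => z /= Mz Mz'; apply: nMy.
  by have := MM _ _ Mz' (MV _ Mz); rewrite gVM gVK gKV.
have phic' : {in M, continuous phi} by rewrite -continuous_open_subspace.
have cit k y : M y -> {for y, continuous (iter k phi)}.
  move=> My; elim: k => [|k IH]; first exact: cvg_id.
  apply: (continuous_comp (f := iter k phi) (g := phi)) => //.
  apply: phic'; rewrite inE; exact: (iter_psi k y My).2.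
have ctn k y : M y -> {for y, continuous (tn k)}.
  move=> My; elim: k => [|k IH]; first exact: cvg_cst.
  have := cont_mul2 Hcm (F := tn k) (G := iter k phi) IH (cit k y My).
  by rewrite /tn.
have c1 : closed [set one] by apply: accessible_closed_set1; exact: hausdorff_accessible.
have Xcl : closed (Xset mul one n phi M).
  rewrite -openC openE => y nXy; change (nbhs y (~` Xset mul one n phi M)).
  case: (pselect (M y)) => My.
  - have ty : (~` [set one]) (tn n y) by move=> /= ty; apply: nXy.
    have := cont_nbhs (ctn n y My) (closed_openC c1) ty.
    by apply: filterS => z /= nz [_ tz]; apply: nz.
  - have : nbhs y (~` M) by apply: open_nbhs_nbhs; split => //; exact: closed_openC.
    by apply: filterS => z nMz [Mz _]; apply: nMz.
have mX : measurable (Xset mul one n phi M : set (g_sigma_algebraType (@open T))).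
  rewrite -[Xset _ _ _ _ _]setCK; apply: measurableC; apply: measO.
  exact: closed_openC.
have XS : Xset mul one n phi M `<=` [set y | M y /\ f y \in S].
  move=> y [My ty]; split => //; rewrite inS //.
  by change (tn n y = one) in ty; rewrite ty f1.
have [mS muS] := sumfib _ SH.
apply: (@le_trans _ _ (mu [set y | M y /\ f y \in S])).
  by apply: le_measure => //; rewrite inE.
rewrite muS muNE -EFin_natmul lee_fin mE -[_ *+ #|S|]mulr_natr mulrC.
exact: rle.
Qed.
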